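(* Let $G$ and $H$ be graphs, each with at least $2$ vertices. The strong product $G\boxtimes H$ is $1$-perfectly orientable if and only if one of the following holds: (i) every connected component of $G$ is complete and $H$ is $1$-perfectly orientable, or vice versa; (ii) every connected component of $G$ is $2$-complete and every connected component of $H$ is a co-chain graph, or vice versa.
   Context: All graphs are finite and simple. An orientation of a graph $G$ is $1$-perfect if the out-neighborhood of every vertex induces a clique in $G$; $G$ is $1$-perfectly orientable if it admits a $1$-perfect orientation. The strong product $G\boxtimes H$ has vertex set $V(G)\times V(H)$, with distinct $(u,v),(u',v')$ adjacent iff $u'\in N_G[u]$ and $v'\in N_H[v]$ (closed neighborhoods). A graph is $2$-complete if it is the union of two (not necessarily distinct) complete graphs sharing at least one vertex (equivalently, it is obtained from $K_1$ or $P_3$ by repeatedly adding true twins, where adding a true twin to $x$ means adding a new vertex adjacent to $x$ and to all neighbors of $x$). A graph $G$ is a co-chain graph if its vertex set can be partitioned into two cliques $X$ and $Y$ such that the vertices of $X$ can be ordered $x_1,\dots,x_{|X|}$ with $N[x_i]\subseteq N[x_j]$ for all $1\le i<j\le |X|$. *)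

(* Defs.v *)
From mathcomp Require Import all_boot.
Set Implicit Arguments. Unset Strict Implicit. Unset Printing Implicit Defensive.

Definition simple_graph (T : finType) (e : rel T) : Prop :=
  symmetric e /\ irreflexive e.

Definition strong_prod (T1 T2 : finType) (e1 : rel T1) (e2 : rel T2) : rel (T1 * T2) :=
  fun p q => [&& p != q, (q.1 == p.1) || e1 p.1 q.1 & (q.2 == p.2) || e2 p.2 q.2].

Definition is_orientation (T : finType) (e : rel T) (o : rel T) : Prop :=
  (forall x y, o x y -> e x y /\ ~~ o y x) /\
  (forall x y, e x y -> o x y || o y x).

Definition one_perfect (T : finType) (e : rel T) (o : rel T) : Prop :=
  is_orientation e o /\
  (forall v x y, o v x -> o v y -> x != y -> e x y).

Definition one_perfectly_orientable (T : finType) (e : rel T) : Prop :=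
  exists o : rel T, one_perfect e o.

Definition component (T : finType) (e : rel T) (x : T) : {set T} :=
  [set y | connect e x y].

Definition complete_on (T : finType) (e : rel T) (C : {set T}) : Prop :=
  forall x y, x \in C -> y \in C -> x != y -> e x y.

(* the subgraph induced by C is 2-complete: union of two (not necessarily distinct)
   complete graphs on vertex sets A, B sharing at least one vertex *)
Definition two_complete_on (T : finType) (e : rel T) (C : {set T}) : Prop :=
  exists A B : {set T},
    [/\ A :|: B = C, A :&: B != set0 &
        forall x y, x \in C -> y \in C -> x != y ->
          (e x y <-> (x \in A /\ y \in A) \/ (x \in B /\ y \in B))].

Definition closed_nbhd_on (T : finType) (e : rel T) (C : {set T}) (x : T) : {set T} :=
  [set y in C | (y == x) || e x y].

Definition cochain_on (T : finType) (e : rel T) (C : {set T}) : Prop :=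
  exists X Y : {set T},
    [/\ X :|: Y = C, [disjoint X & Y], complete_on e X, complete_on e Y &
        exists s : seq T,
          [/\ uniq s, (forall x, (x \in s) = (x \in X)) &
              forall (x0 : T) (i j : nat), i < j -> j < size s ->
                closed_nbhd_on e C (nth x0 s i) \subset closed_nbhd_on e C (nth x0 s j)]].

(* Main.v *)
Require Import Defs.
From mathcomp Require Import all_boot.
From Stdlib Require Import Classical IndefiniteDescription.
Set Implicit Arguments. Unset Strict Implicit. Unset Printing Implicit Defensive.


Section Basics.
Variables (T : finType) (e : rel T).
Hypothesis esym : symmetric e.
Hypothesis eirr : irreflexive e.

Lemma K_opo (K : T -> {set T}) :
  (forall v x y, x \in K v -> y \in K v -> x != y -> e x y) ->
  (forall u v, e u v -> v \in K u \/ u \in K v) ->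
  one_perfectly_orientable e.
Proof.
move=> Kcl Kcov.
exists (fun u v => [&& e u v, v \in K u & (u \notin K v) || (enum_rank u < enum_rank v)%N]).
split; first split.
- move=> x y /and3P[exy yK H]; split=> //.
  apply/negP=> /and3P[eyx xK H2]; move: H H2; rewrite xK yK /=.
  by move=> H1 H2; have := ltn_trans H1 H2; rewrite ltnn.
- move=> x y exy; rewrite exy (esym y x) exy /=.
  have xny : x != y by apply/eqP=> h; move: exy; rewrite h eirr.
  have rne : (enum_rank x : nat) != enum_rank y by apply: contra xny => /eqP/val_inj/enum_rank_inj ->.
  case: (Kcov x y exy) => [xy|yx]; [rewrite xy|rewrite yx];
  case: (boolP (x \in K y)) => //= xK; case: (boolP (y \in K x)) => //= yK; rewrite ?orbT //;
  by case: (ltngtP (enum_rank x) (enum_rank y)) => //= h; rewrite ?orbT //; move: rne; rewrite h eqxx.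
- by move=> v x y /and3P[_ xK _] /and3P[_ yK _] xy; exact: Kcl xK yK xy.
Qed.

End Basics.

Lemma sp_swap (T1 T2 : finType) (e1 : rel T1) (e2 : rel T2) p q :
  strong_prod e2 e1 p q = strong_prod e1 e2 (p.2, p.1) (q.2, q.1).
Proof.
case: p => a b; case: q => c d; rewrite /strong_prod /=.
have -> : ((a, b) != (c, d)) = ((b, a) != (d, c)) by rewrite !xpair_eqE andbC.
by congr (_ && _); rewrite andbC.
Qed.

Lemma opo_swap (T1 T2 : finType) (e1 : rel T1) (e2 : rel T2) :
  one_perfectly_orientable (strong_prod e1 e2) ->
  one_perfectly_orientable (strong_prod e2 e1).
Proof.
move=> [o [[o1 o2] o3]].
exists (fun p q => o (p.2, p.1) (q.2, q.1)); split; first split.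
- by move=> x y /o1; rewrite sp_swap.
- by move=> x y; rewrite sp_swap => /o2.
- move=> v x y h1 h2 xy; rewrite sp_swap; apply: o3 h1 h2 _.
  by apply: contra xy => /eqP[]; case: x => ? ?; case: y => ? ? /= -> ->.
Qed.

Lemma opo_layer (T1 T2 : finType) (e1 : rel T1) (e2 : rel T2) (a : T1) :
  irreflexive e2 ->
  one_perfectly_orientable (strong_prod e1 e2) -> one_perfectly_orientable e2.
Proof.
move=> irr [o [[o1 o2] o3]].
exists (fun v w => o (a, v) (a, w)); split; first split.
- move=> x y /o1[h ->]; split=> //.
  move: h; rewrite /strong_prod /= xpair_eqE eqxx /= => /andP[xy /orP[/eqP yx|//]].
  by move: xy; rewrite yx eqxx.
- move=> x y exy; apply: o2; rewrite /strong_prod /= xpair_eqE eqxx exy orbT /= andbT.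
  by apply/negP=> /eqP h; move: exy; rewrite h irr.
- move=> v x y h1 h2 xy; have := o3 _ _ _ h1 h2.
  rewrite xpair_eqE eqxx /= => /(_ xy); rewrite /strong_prod /= xpair_eqE eqxx /=.
  by case/andP=> _; rewrite eq_sym (negbTE xy).
Qed.


Section Paths.
Variables (T : finType) (e : rel T).

Lemma cross (P : pred T) x p : path e x p -> P x -> ~~ P (last x p) ->
  exists u v, [/\ e u v, P u, ~~ P v & connect e x u].
Proof.
elim: p x => [|y p IH] x /=; first by move=> _ ->.
case/andP=> exy py Px Pl.
case: (boolP (P y)) => Py.
- have [u [v [euv Pu Pv cyu]]] := IH y py Py Pl.
  exists u, v; split=> //; exact: connect_trans (connect1 exy) cyu.
- by exists x, y; split=> //; exact: connect0.
Qed.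

Definition LI (s : seq T) := forall s1 s3 u v w,
  s = s1 ++ [:: u, v, w & s3] -> u != w /\ ~~ e u w.

Lemma exists_LI x p : path e x p ->
  exists q, [/\ path e x q, last x q = last x p & LI (x :: q)].
Proof.
move: {2}(size p) (leqnn (size p)) => n; elim: n x p => [|n IH] x p.
  case: p => //= _ _; exists [::]; split=> //.
  by move=> [|? [|? ?]] ? ? ? ?.
move=> sp pp.
case: (classic (LI (x :: p))) => [Hl|Hn]; first by exists p.
have [s1 [s3 [u [v [w [eqs bad]]]]]] : exists s1 s3 u v w,
    x :: p = s1 ++ [:: u, v, w & s3] /\ (u = w \/ e u w).
  apply: NNPP => Hc; apply: Hn => s1 s3 u v w eqs.
  case: (boolP (u == w)) => [/eqP uw|uw].
    by exfalso; apply: Hc; exists s1, s3, u, v, w; split=> //; left.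
  case: (boolP (e u w)) => euw; last by [].
  by exfalso; apply: Hc; exists s1, s3, u, v, w; split=> //; right.
case: s1 eqs => [|a s1] /= [].
- move=> xu pe; subst u p.
  case: bad => [xw|euw].
  + subst w; apply: (IH x s3).
    * by move: sp => /=; rewrite ltnS => /ltnW.
    * by move: pp => /= /and3P[].
  + have h1 : size (w :: s3) <= n by move: sp => /=; rewrite ltnS.
    have h2 : path e x (w :: s3) by move: pp => /= /and3P[_ _ ->]; rewrite euw.
    have [q [pq lq Lq]] := IH x (w :: s3) h1 h2.
    by exists q; split=> //; rewrite lq.
- move=> xa pe; subst a p.
  pose p' := if u == w then s1 ++ u :: s3 else s1 ++ [:: u, w & s3].
  have Hp' : path e x p' /\ last x p' = last x (s1 ++ [:: u, v, w & s3]).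
    move: pp; rewrite /p' cat_path last_cat /= => /andP[ps1 /and4P[h1 h2 h3 h4]].
    case: (boolP (u == w)) => [/eqP uw|nuw] /=.
      subst w; rewrite cat_path last_cat /= ps1 h1 /=.
      by rewrite h4.
    case: bad => [uw|euw]; first by move: nuw; rewrite uw eqxx.
    by rewrite cat_path last_cat /= ps1 h1 euw h4.
  case: Hp' => Hp1 Hp2.
  have h1 : size p' <= n.
    move: sp; rewrite /p' size_cat /=; case: (u == w) => /=; rewrite ?size_cat /= !addnS ltnS;
    by move=> h; apply: leq_trans h; rewrite ?leqnSn // (leq_trans (leqnSn _)) ?leqnSn.
  have [q [pq lq Lq]] := IH x p' h1 Hp1.
  by exists q; split=> //; rewrite lq Hp2.
Qed.

End Paths.


Section GL.
Variables (T : finType) (e : rel T) (X : {set T}).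
Hypothesis esym : symmetric e.
Hypothesis Hstar : forall w h h', (h \in X) = (h' \in X) -> (h == w) || e w h ->
  (h' == w) || e w h' -> h != h' -> e h h'.
Hypothesis HC : forall z z', (z \in X) = (z' \in X) -> e z z' ->
  (forall t, (t \in X) != (z \in X) -> e z t -> e z' t) \/
  (forall t, (t \in X) != (z \in X) -> e z' t -> e z t).

Lemma star_col w h h' : e w h -> e w h' -> h != h' -> ~~ e h h' -> (h \in X) != (h' \in X).
Proof.
move=> wh wh' hh' nhh; apply/negP=> /eqP eqc.
by move: nhh; rewrite (@Hstar w h h' eqc) // ?wh ?wh' ?orbT.
Qed.

Lemma GL x x' : connect e x x' -> (x \in X) = (x' \in X) -> x != x' -> e x x'.
Proof.
move=> /connectP[p pp ->] cx xx'.
have [q [pq lq Lq]] := exists_LI pp; rewrite -lq in cx xx' *; clear lq pp.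
apply: NNPP => nex; move/negP: nex => nex.
case: q pq Lq cx xx' nex => [|p1 [|p2 r]] /=.
- by rewrite eqxx.
- by move=> /andP[-> _].
move=> /and3P[e01 e12 pr] Lq cx xx' nex.
have [n02 ne02] := Lq [::] r x p1 p2 erefl.
have e10 : e p1 x by rewrite esym.
have c02 := star_col e10 e12 n02 ne02.
case: r pr Lq cx xx' nex => [|p3 r] /=; first by move=> _ _ cx; rewrite cx eqxx in c02.
move=> /andP[e23 pr] Lq cx xx' nex.
have [n13 ne13] := Lq [:: x] r p1 p2 p3 erefl.
have e21 : e p2 p1 by rewrite esym.
have c13 := star_col e21 e23 n13 ne13.
case: (boolP ((p1 \in X) == (x \in X))) => [/eqP c1x|c1x].
-
  case: r pr Lq cx xx' nex => [|p4 r] /=.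
    by move=> _ _ cx; move: c13 c02; rewrite -cx c1x; case: (x \in X); case: (p2 \in X).
  move=> /andP[e34 pr] Lq cx xx' nex.
  have [n24 ne24] := Lq [:: x; p1] r p2 p3 p4 erefl.
  have e32 : e p3 p2 by rewrite esym.
  have c24 := star_col e32 e34 n24 ne24.
  have c23 : (p2 \in X) = (p3 \in X).
    by move: c13 c02; rewrite c1x; case: (x \in X); case: (p2 \in X); case: (p3 \in X).
  case: (HC c23 e23) => H.
  + move: ne13; rewrite esym (H p1) //.
    by move: c02; rewrite c1x; case: (x \in X); case: (p2 \in X).
  + move: ne24; rewrite (H p4) //.
    by move: c24 c13 c02; rewrite c1x; case: (x \in X); case: (p2 \in X); case: (p3 \in X); case: (p4 \in X).
-
  have c12 : (p1 \in X) = (p2 \in X).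
    by move: c1x c02; case: (x \in X); case: (p2 \in X); case: (p1 \in X).
  case: (HC c12 e12) => H.
  + by move: ne02; rewrite esym (H x) // eq_sym.
  + move: ne13; rewrite (H p3) //.
    by move: c13 c1x; case: (x \in X); case: (p1 \in X); case: (p3 \in X).
Qed.

End GL.


Section Cochain.
Variables (T : finType) (e : rel T) (X D : {set T}).
Hypothesis esym : symmetric e.
Hypothesis Hsame : forall u v, u \in D -> v \in D -> (u \in X) = (v \in X) -> u != v -> e u v.
Hypothesis HCX : forall z z', z \in X -> z' \in X -> e z z' ->
  (forall t, t \notin X -> e z t -> e z' t) \/ (forall t, t \notin X -> e z' t -> e z t).

Let N := closed_nbhd_on e D.

Lemma sub_nb x x' : x \in D -> x' \in D -> x \in X -> x' \in X -> x != x' ->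
  (forall t, t \notin X -> e x t -> e x' t) -> N x \subset N x'.
Proof.
move=> xD x'D xX x'X xx' H; apply/subsetP => y; rewrite !inE => /andP[yD /orP[/eqP->|exy]].
  by rewrite xD /= (Hsame x'D xD) ?orbT // ?x'X ?xX // eq_sym.
rewrite yD /=; case: (eqVneq y x') => [->|yx']; first by [].
case: (boolP (y \in X)) => yX.
  by rewrite (Hsame x'D yD) ?orbT ?x'X ?yX // eq_sym.
by rewrite H ?orbT.
Qed.

Lemma comp_nb x x' : x \in D -> x' \in D -> x \in X -> x' \in X ->
  (N x \subset N x') || (N x' \subset N x).
Proof.
move=> xD x'D xX x'X; case: (eqVneq x x') => [->|xx']; first by rewrite subxx.
have exx : e x x' by apply: Hsame; rewrite ?xX ?x'X.
case: (HCX xX x'X exx) => H.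
  by rewrite sub_nb.
by rewrite (sub_nb x'D xD) ?orbT // eq_sym.
Qed.

Lemma cochain_of : cochain_on e D.
Proof.
exists (D :&: X), (D :\: X); split.
- exact: setID.
- apply/pred0P => z /=; rewrite !inE; by case: (z \in X); rewrite ?andbF.
- move=> x y; rewrite !inE => /andP[xD xX] /andP[yD yX] xy; apply: Hsame => //.
  by rewrite xX yX.
- move=> x y; rewrite !inE => /andP[xX xD] /andP[yX yD] xy; apply: Hsame => //.
  by rewrite (negbTE xX) (negbTE yX).
pose r := fun u v => #|N u| <= #|N v|.
have rtr : transitive r by move=> ? ? ? ; apply: leq_trans.
have rtot : total r by move=> u v; apply: leq_total.
exists (sort r (enum (D :&: X))); split.
- by rewrite sort_uniq enum_uniq.
- by move=> x; rewrite mem_sort mem_enum.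
- move=> x0 i j ij js.
  set s := sort r (enum (D :&: X)).
  have is_ : i < size s by apply: ltn_trans ij js.
  have := sorted_ltn_nth rtr x0 (sort_sorted rtot (enum (D :&: X))).
  move=> /(_ i j is_ js ij); rewrite /r => hc.
  have : nth x0 s i \in D :&: X by rewrite -(mem_enum (mem (D :&: X))) -(mem_sort r) mem_nth.
  have : nth x0 s j \in D :&: X by rewrite -(mem_enum (mem (D :&: X))) -(mem_sort r) mem_nth.
  rewrite !inE => /andP[jD jX] /andP[iD iX].
  case/orP: (comp_nb iD jD iX jX) => // sji.
  change (N (nth x0 s i) \subset N (nth x0 s j)).
  by have := eqEcard (N (nth x0 s j)) (N (nth x0 s i)); rewrite sji hc => /= /eqP ->.
Qed.

End Cochain.


Section PartA.
Variables (T1 T2 : finType) (e1 : rel T1) (e2 : rel T2).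
Hypotheses (esym1 : symmetric e1) (eirr1 : irreflexive e1).
Hypotheses (esym2 : symmetric e2) (eirr2 : irreflexive e2).
Variable o : rel (T1 * T2).
Hypothesis op : one_perfect (strong_prod e1 e2) o.
Variables a b c : T1.
Hypotheses (eab : e1 a b) (ebc : e1 b c) (nac : a != c) (neac : ~~ e1 a c).

Lemma o1 : forall x y, o x y -> strong_prod e1 e2 x y /\ ~~ o y x.
Proof. by case: op => [[]]. Qed.
Lemma o2 : forall x y, strong_prod e1 e2 x y -> o x y || o y x.
Proof. by case: op => [[]]. Qed.
Lemma o3 : forall v x y, o v x -> o v y -> x != y -> strong_prod e1 e2 x y.
Proof. by case: op. Qed.

Lemma spE g h g' h' : strong_prod e1 e2 (g, h) (g', h') =
  [&& (g, h) != (g', h'), (g' == g) || e1 g g' & (h' == h) || e2 h h'].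
Proof. by []. Qed.

Let Xs := [set h | [forall w, ~~ o (b, h) (c, w)]].

Lemma nab : a != b. Proof. by apply/eqP=> h; move: eab; rewrite h eirr1. Qed.
Lemma nbc : b != c. Proof. by apply/eqP=> h; move: ebc; rewrite h eirr1. Qed.

Lemma F_noA h w : h \notin Xs -> ~~ o (b, h) (a, w).
Proof.
rewrite inE negb_forall => /existsP[w0]; rewrite negbK => hc.
apply/negP=> ha; have := o3 ha hc.
rewrite xpair_eqE (negbTE nac) /= => /(_ erefl).
by rewrite spE [c == a]eq_sym (negbTE nac) (negbTE neac) /= andbF.
Qed.

Lemma F2 h w : h \in Xs -> (h == w) || e2 w h -> o (c, w) (b, h).
Proof.
move=> hX hw.
have : strong_prod e1 e2 (c, w) (b, h).
  by rewrite spE xpair_eqE [c == b]eq_sym (negbTE nbc) /= esym1 ebc hw.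
move/o2 => /orP[//|bad].
by move: hX; rewrite inE => /forallP/(_ w); rewrite bad.
Qed.

Lemma F3 h w : h \notin Xs -> (h == w) || e2 w h -> o (a, w) (b, h).
Proof.
move=> hX hw.
have : strong_prod e1 e2 (a, w) (b, h).
  by rewrite spE xpair_eqE (negbTE nab) /= eab orbT.
move/o2 => /orP[//|bad].
by move: (F_noA w hX); rewrite bad.
Qed.

Lemma HstarA w h h' : (h \in Xs) = (h' \in Xs) -> (h == w) || e2 w h ->
  (h' == w) || e2 w h' -> h != h' -> e2 h h'.
Proof.
move=> col hw h'w hh'.
have nbb : (b, h) != (b, h') by rewrite xpair_eqE eqxx.
have : strong_prod e1 e2 (b, h) (b, h').
  case: (boolP (h \in Xs)) col => hX col.
    by apply: (o3 (F2 hX hw) (F2 _ h'w)) => //; rewrite -col.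
  by apply: (o3 (F3 hX hw) (F3 _ h'w)) => //; rewrite -col.
by rewrite spE [h' == h]eq_sym (negbTE hh') /= => /and3P[].
Qed.

Lemma HC_gen L (P : pred T2) : L != b ->
  (forall t w, P t -> (t == w) || e2 w t -> o (L, w) (b, t)) ->
  forall z z', e2 z z' ->
  (forall t, P t -> t != z' -> e2 z t -> e2 z' t) \/
  (forall t, P t -> t != z -> e2 z' t -> e2 z t).
Proof.
move=> Lb HL z z' ezz.
have zz : z != z' by apply/eqP=> h; move: ezz; rewrite h eirr2.
have : strong_prod e1 e2 (L, z) (L, z') by rewrite spE xpair_eqE eqxx /= ezz !orbT andbT.
move/o2=> /orP[H|H]; [left|right] => t Pt tz et.
- have ot := HL t z Pt (introT orP (or_intror et)).
  have := o3 H ot; rewrite xpair_eqE (negbTE Lb) => /(_ erefl).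
  by rewrite spE (negbTE tz) /= => /and3P[].
- have ot := HL t z' Pt (introT orP (or_intror et)).
  have := o3 H ot; rewrite xpair_eqE (negbTE Lb) => /(_ erefl).
  by rewrite spE (negbTE tz) /= => /and3P[].
Qed.

Lemma HCA z z' : (z \in Xs) = (z' \in Xs) -> e2 z z' ->
  (forall t, (t \in Xs) != (z \in Xs) -> e2 z t -> e2 z' t) \/
  (forall t, (t \in Xs) != (z \in Xs) -> e2 z' t -> e2 z t).
Proof.
move=> col ezz.
have cb : c != b by rewrite eq_sym nbc.
case: (boolP (z \in Xs)) col => zX col.
- have := @HC_gen a (fun t => t \notin Xs) nab (fun t w tX tw => F3 tX tw) z z' ezz.
  case=> H; [left|right] => t tX'; (have tX : t \notin Xs by move: tX'; case: (t \in Xs));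
  apply: H => //; apply/eqP=> tz; move: tX; rewrite tz ?zX -?col ?zX //.
- have := @HC_gen c (fun t => t \in Xs) cb (fun t w tX tw => F2 tX tw) z z' ezz.
  case=> H; [left|right] => t tX'; (have tX : t \in Xs by move: tX'; case: (t \in Xs));
  apply: H => //; apply/eqP=> tz; move: tX; rewrite tz ?(negbTE zX) -?col ?(negbTE zX) //.
Qed.

Lemma partA y : cochain_on e2 (component e2 y).
Proof.
have csym := sym_connect_sym esym2.
apply: (@cochain_of _ _ Xs) => //.
- move=> u v yu yv col uv; rewrite !inE in yu yv; apply: (GL esym2 HstarA HCA) => //.
  by apply: connect_trans yv; rewrite csym.
- move=> z z' zX z'X ezz.
  have col : (z \in Xs) = (z' \in Xs) by rewrite zX z'X.
  by case: (HCA col ezz) => H; [left|right] => t tX; apply: H => //; rewrite zX (negbTE tX).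
Qed.

End PartA.


Definition walk4 (T : finType) (e : rel T) (w x y z : T) :=
  [/\ e w x, e x y, e y z, (w != y) && ~~ e w y & (x != z) && ~~ e x z].

Section PartB.
Variables (T : finType) (e : rel T).
Hypotheses (esym : symmetric e) (eirr : irreflexive e).

Lemma partB y0 : cochain_on e (component e y0) ->
  two_complete_on e (component e y0) \/ exists w x y z, walk4 e w x y z.
Proof.
set D := component e y0.
move=> [X [Y [XYD dXY cX cY _]]].
have XD : X \subset D by rewrite -XYD subsetUl.
have YD : Y \subset D by rewrite -XYD subsetUr.
have nXY : forall z, z \in X -> z \in Y -> False.
  by move=> z zX zY; move/pred0P: dXY => /(_ z); rewrite /= zX zY.
have XorY : forall z, z \in D -> (z \in X) || (z \in Y).
  by move=> z; rewrite -XYD inE.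
pose univ u := (u \in D) && [forall z, (z \in D) ==> (z != u) ==> e u z].
have univP : forall u z, univ u -> z \in D -> z != u -> e u z.
  by move=> u z /andP[_ /forallP/(_ z)] H zD zu; move: H; rewrite zD zu.
have nunivP : forall u, u \in D -> ~~ univ u -> exists z, [/\ z \in D, z != u & ~~ e u z].
  move=> u uD; rewrite /univ uD /= negb_forall => /existsP[z]; rewrite !negb_imply => /and3P[zD zu nz].
  by exists z.
case: (classic (exists x y, [/\ x \in X, y \in Y, e x y, ~~ univ x & ~~ univ y])) => [[x [y [xX yY exy nux nuy]]]|Hn].
  right.
  have xD : x \in D by apply: (subsetP XD).
  have yD : y \in D by apply: (subsetP YD).
  have [z [zD zx nxz]] := nunivP x xD nux.
  have [w [wD wy nyw]] := nunivP y yD nuy.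
  have zY : z \in Y.
    by case/orP: (XorY z zD) => // zX; move: nxz; rewrite (cX x z xX zX) // eq_sym.
  have wX : w \in X.
    by case/orP: (XorY w wD) => // wY; move: nyw; rewrite (cY y w yY wY) // eq_sym.
  exists w, x, y, z; split=> //.
  - by apply: (cX w x wX xX); apply/eqP=> wx; move: nyw; rewrite wx esym exy.
  - by apply: (cY y z yY zY); apply/eqP=> yz; move: nxz; rewrite -yz exy.
  - by rewrite esym nyw andbT; apply/eqP=> wy'; apply: (nXY w) => //; rewrite wy'.
  - by rewrite nxz andbT eq_sym.
have edgeU : forall x y, x \in X -> y \in Y -> e x y -> univ x || univ y.
  move=> x y xX yY exy; apply: contraT; rewrite negb_or => /andP[nx ny].
  by exfalso; apply: Hn; exists x, y.
case: (classic (exists u, univ u)) => [[u uu]|Hnu].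
  left; pose U := [set u | univ u].
  exists (X :|: U), (Y :|: U); split.
  - rewrite setUACA setUid XYD; apply/setUidPl/subsetP => z; rewrite inE => /andP[].
    by [].
  - by apply/set0Pn; exists u; rewrite !inE uu !orbT.
  - move=> x y xD yD xy.
    have inA z : (z \in X :|: U) = (z \in X) || univ z by rewrite !inE.
    have inB z : (z \in Y :|: U) = (z \in Y) || univ z by rewrite !inE.
    have yx : y != x by rewrite eq_sym.
    rewrite !inA !inB; split.
    + move=> exy; case/orP: (XorY x xD) => xX; case/orP: (XorY y yD) => yY.
      * by left; rewrite xX yY.
      * by case/orP: (edgeU x y xX yY exy) => ux; [right; rewrite ux yY orbT | left; rewrite xX ux orbT].
      * rewrite esym in exy.
        by case/orP: (edgeU y x yY xX exy) => ux; [right; rewrite ux xX orbT | left; rewrite yY ux orbT].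
      * by right; rewrite xX yY.
    + move=> [[hx hy]|[hx hy]].
      * case/orP: hx => [xX|ux]; case/orP: hy => [yX|uy].
        - exact: cX.
        - by rewrite esym; apply: univP.
        - exact: univP.
        - exact: univP.
      * case/orP: hx => [xX|ux]; case/orP: hy => [yX|uy].
        - exact: cY.
        - by rewrite esym; apply: univP.
        - exact: univP.
        - exact: univP.
left.
exfalso.
have y0D : y0 \in D by rewrite inE connect0.
have nclique : forall S : {set T}, (forall x y, x \in S -> y \in S -> x != y -> e x y) ->
    y0 \in S -> D \subset S -> False.
  move=> S cS y0S DS; apply: Hnu; exists y0; rewrite /univ y0D /=.
  apply/forallP=> z; apply/implyP=> zD; apply/implyP=> zy.
  by apply: cS => //; [apply: (subsetP DS) | rewrite eq_sym].
case: (set_0Vmem X) => [X0|[x xX]].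
  apply: (nclique Y cY); first by case/orP: (XorY y0 y0D) => //; rewrite X0 inE.
  by rewrite -XYD X0 set0U.
case: (set_0Vmem Y) => [Y0|[y yY]].
  apply: (nclique X cX); first by case/orP: (XorY y0 y0D) => //; rewrite Y0 inE.
  by rewrite -XYD Y0 setU0.
have xD : x \in D by apply: (subsetP XD).
have yD : y \in D by apply: (subsetP YD).
have cxy : connect e x y.
  apply: connect_trans (_ : connect e y0 y); last by rewrite inE in yD.
  by rewrite (sym_connect_sym esym); rewrite inE in xD.
case/connectP: cxy => p pp ly.
have nl : last x p \notin X by rewrite -ly; apply/negP=> yX; apply: (nXY y).
have [u [v [euv uX vX cxu]]] := @cross T e (fun z => z \in X) x p pp xX nl.
have uD : u \in D by rewrite inE (connect_trans _ cxu) //; rewrite inE in xD.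
have vD : v \in D by rewrite inE (connect_trans _ (connect_trans cxu (connect1 euv))) //; rewrite inE in xD.
have vY : v \in Y by case/orP: (XorY v vD) => //; rewrite (negbTE vX).
by case/orP: (edgeU u v uX vY euv) => H; apply: Hnu; [exists u|exists v].
Qed.

End PartB.


Lemma domino_bool (ab ba ac ca bd db cd dc ce ec df fd ef fe : bool) :
  ab || ba -> ac || ca -> bd || db -> cd || dc -> ce || ec -> df || fd -> ef || fe ->
  ~~ (ab && ac) -> ~~ (ba && bd) -> ~~ (ca && cd) -> ~~ (ca && ce) -> ~~ (cd && ce) ->
  ~~ (db && dc) -> ~~ (db && df) -> ~~ (dc && df) -> ~~ (ec && ef) -> ~~ (fd && fe) -> False.
Proof.
by move=> /orP[]-> /orP[]-> /orP[]-> /orP[]-> /orP[]-> /orP[]-> /orP[]->; rewrite ?andbT ?andTb.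
Qed.

Section Domino.
Variables (T1 T2 : finType) (e1 : rel T1) (e2 : rel T2).
Hypotheses (esym1 : symmetric e1) (eirr1 : irreflexive e1).
Hypotheses (esym2 : symmetric e2) (eirr2 : irreflexive e2).

Lemma sp_adj g g' h h' : e1 g g' -> e2 h h' -> strong_prod e1 e2 (g, h) (g', h').
Proof.
move=> eg eh; rewrite /strong_prod /= eg eh !orbT /= !andbT.
by apply/negP=> /eqP [gg _]; move: eg; rewrite gg eirr1.
Qed.

Lemma sp_nadj1 g g' h h' : g != g' -> ~~ e1 g g' ->
  ((g, h) != (g', h')) && ~~ strong_prod e1 e2 (g, h) (g', h').
Proof.
move=> ng neg; rewrite /strong_prod /= [g' == g]eq_sym (negbTE ng) (negbTE neg) /=.
by rewrite andbF andbT xpair_eqE (negbTE ng).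
Qed.

Lemma sp_nadj2 g g' h h' : h != h' -> ~~ e2 h h' ->
  ((g, h) != (g', h')) && ~~ strong_prod e1 e2 (g, h) (g', h').
Proof.
move=> ng neg; rewrite /strong_prod /= [h' == h]eq_sym (negbTE ng) (negbTE neg) /=.
by rewrite !andbF andbT xpair_eqE (negbTE ng) andbF.
Qed.

Lemma domino o : one_perfect (strong_prod e1 e2) o ->
  forall g0 g1 g2 g3 h0 h1 h2 h3,
  walk4 e1 g0 g1 g2 g3 -> walk4 e2 h0 h1 h2 h3 -> False.
Proof.
move=> [[_ o2] o3] g0 g1 g2 g3 h0 h1 h2 h3 [e01 e12 e23 /andP[n02 ne02] /andP[n13 ne13]]
  [f01 f12 f23 /andP[m02 me02] /andP[m13 me13]].
pose A := (g0, h1); pose B := (g1, h0); pose C := (g1, h2);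
pose D := (g2, h1); pose E := (g2, h3); pose F := (g3, h2).
have nn : forall v x y, ((x != y) && ~~ strong_prod e1 e2 x y) -> ~~ (o v x && o v y).
  move=> v x y /andP[xy nxy]; apply/negP=> /andP[ox oy]; move: nxy; rewrite (o3 _ _ _ ox oy xy) //.
have f10 : e2 h1 h0 by rewrite esym2.
have f21 : e2 h2 h1 by rewrite esym2.
have f32 : e2 h3 h2 by rewrite esym2.
apply: (@domino_bool (o A B) (o B A) (o A C) (o C A) (o B D) (o D B) (o C D) (o D C)
   (o C E) (o E C) (o D F) (o F D) (o E F) (o F E)).
- by apply: o2; apply: sp_adj.
- by apply: o2; apply: sp_adj.
- by apply: o2; apply: sp_adj.
- by apply: o2; apply: sp_adj.
- by apply: o2; apply: sp_adj.
- by apply: o2; apply: sp_adj.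
- by apply: o2; apply: sp_adj.
- by apply: nn; apply: sp_nadj2.
- by apply: nn; apply: sp_nadj1.
- by apply: nn; apply: sp_nadj1.
- by apply: nn; apply: sp_nadj1.
- by apply: nn; apply: sp_nadj2.
- by apply: nn; apply: sp_nadj2.
- by apply: nn; apply: sp_nadj1.
- by apply: nn; apply: sp_nadj1.
- by apply: nn; apply: sp_nadj1.
- by apply: nn; apply: sp_nadj2.
Qed.

End Domino.


Section Gen.
Variables (T : finType) (e : rel T).
Hypotheses (esym : symmetric e) (eirr : irreflexive e).

Lemma comp_eq x y : connect e x y -> component e x = component e y.
Proof.
move=> cxy; have cs := sym_connect_sym esym.
apply/setP => z; rewrite !inE; apply/idP/idP => h.
  by apply: connect_trans h; rewrite cs.
exact: connect_trans cxy h.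
Qed.

Lemma mem_comp x : x \in component e x.
Proof. by rewrite inE connect0. Qed.

Lemma comp_adj x y : (y == x) || e x y -> component e x = component e y.
Proof. by case/orP=> [/eqP->|/connect1 h] //; apply: comp_eq. Qed.

Definition chainX (X Y : {set T}) := forall x x', x \in X -> x' \in X ->
  (forall t, t \in Y -> e x t -> e x' t) \/ (forall t, t \in Y -> e x' t -> e x t).

Lemma chain_sym X Y : chainX X Y -> chainX Y X.
Proof.
move=> cXY y y' yY y'Y.
case: (classic (forall t, t \in X -> e y t -> e y' t)) => [h|h]; [by left|right].
have [t1 [t1X ey1 ny1]] : exists t1, [/\ t1 \in X, e y t1 & ~~ e y' t1].
  apply: NNPP => H'; apply: h => t1 t1X ey1; case: (boolP (e y' t1)) => // ny.
  by exfalso; apply: H'; exists t1.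
move=> t tX ey't; apply/negPn/negP => ney.
case: (cXY t1 t t1X tX) => H.
  by move: ney; rewrite esym (H y yY) // esym.
by move: ny1; rewrite esym (H y' y'Y) // esym.
Qed.

Definition cl (X Y : {set T}) h : {set T} :=
  if h \in X then [set h' | ((h' \in X) && [forall t, (t \in Y) ==> e h t ==> e h' t]) ||
                            ((h' \in Y) && e h h')]
  else Y.

Variables (X Y : {set T}).
Hypotheses (cX : complete_on e X) (cY : complete_on e Y)
  (dXY : forall z, z \in X -> z \in Y -> False) (chXY : chainX X Y).

Lemma cl_clique h u v : u \in cl X Y h -> v \in cl X Y h -> u != v -> e u v.
Proof.
rewrite /cl; case: (h \in X); last by move=> uY vY; apply: cY.
rewrite !inE => /orP[/andP[uX /forallP uH]|/andP[uY hu]] /orP[/andP[vX /forallP vH]|/andP[vY hv]] uv.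
- exact: cX.
- by have := uH v; rewrite vY hv.
- by have := vH u; rewrite uY hu esym.
- exact: cY.
Qed.

Lemma cl_self h : (h \in X) || (h \in Y) -> h \in cl X Y h.
Proof.
rewrite /cl; case: (boolP (h \in X)) => //= hX _.
by rewrite inE hX /=; apply/orP; left; apply/forallP => t; apply/implyP => _; apply/implyP.
Qed.

Lemma cl_Y h h' : h' \in Y -> (h' == h) || e h h' -> h' \in cl X Y h.
Proof.
move=> h'Y; rewrite /cl; case: (boolP (h \in X)) => //= hX.
case/orP=> [/eqP hh|ehh]; first by exfalso; apply: (dXY hX); rewrite -hh.
by rewrite inE h'Y ehh orbT.
Qed.

Lemma cl_cov h h' : (h \in X) || (h \in Y) -> (h' \in X) || (h' \in Y) -> e h h' ->
  h' \in cl X Y h \/ h \in cl X Y h'.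
Proof.
move=> hD h'D ehh; rewrite /cl.
case: (boolP (h \in X)) => hX; case: (boolP (h' \in X)) => h'X.
- case: (chXY hX h'X) => H; [left|right]; rewrite inE ?hX ?h'X /=; apply/orP; left;
  apply/forallP => t; apply/implyP => tY; apply/implyP; exact: H.
- by left; rewrite inE; apply/orP; right; move: h'D; rewrite (negbTE h'X) /= => ->.
- by right; rewrite inE; apply/orP; right; move: hD; rewrite (negbTE hX) /= => ->; rewrite esym.
- by left; move: h'D; rewrite (negbTE h'X).
Qed.

End Gen.


Section Suff.
Variables (T1 T2 : finType) (e1 : rel T1) (e2 : rel T2).
Hypotheses (esym1 : symmetric e1) (eirr1 : irreflexive e1).
Hypotheses (esym2 : symmetric e2) (eirr2 : irreflexive e2).

Lemma sp_sym : symmetric (strong_prod e1 e2).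
Proof.
move=> p q; rewrite /strong_prod eq_sym; congr (_ && _).
by rewrite [q.1 == _]eq_sym esym1 [q.2 == _]eq_sym esym2.
Qed.

Lemma sp_irr : irreflexive (strong_prod e1 e2).
Proof. by move=> p; rewrite /strong_prod eqxx. Qed.

Lemma prod_clique (S1 : pred T1) (S2 : pred T2) p q :
  (forall x y, S1 x -> S1 y -> x != y -> e1 x y) ->
  (forall x y, S2 x -> S2 y -> x != y -> e2 x y) ->
  S1 p.1 -> S1 q.1 -> S2 p.2 -> S2 q.2 -> p != q -> strong_prod e1 e2 p q.
Proof.
move=> c1 c2 p1 q1 p2 q2 pq; rewrite /strong_prod pq /=.
have h1 : (q.1 == p.1) || e1 p.1 q.1.
  by case: (eqVneq q.1 p.1) => [//|n1] /=; apply: c1 => //; rewrite eq_sym.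
have h2 : (q.2 == p.2) || e2 p.2 q.2.
  by case: (eqVneq q.2 p.2) => [//|n1] /=; apply: c2 => //; rewrite eq_sym.
by rewrite h1 h2.
Qed.

Lemma suff1 : (forall x, complete_on e1 (component e1 x)) ->
  one_perfectly_orientable e2 -> one_perfectly_orientable (strong_prod e1 e2).
Proof.
move=> cc [o [[o1 o2] o3]].
apply: (K_opo sp_sym sp_irr (K := fun v => [set p | (p.1 \in component e1 v.1) && ((p.2 == v.2) || o v.2 p.2)])).
- move=> v x y; rewrite !inE => /andP[x1 x2] /andP[y1 y2] xy.
  apply: (prod_clique (S1 := fun z => connect e1 v.1 z)
                      (S2 := fun z => (z == v.2) || o v.2 z) _ _ x1 y1 x2 y2 xy).
  + by move=> a b ha hb ab; apply: (cc v.1); rewrite ?inE.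
  + move=> a b /orP[/eqP->|oa] /orP[/eqP->|ob] ab; rewrite ?eqxx // in ab.
    * by case: (o1 _ _ ob).
    * by rewrite esym2; case: (o1 _ _ oa).
    * exact: o3 oa ob ab.
- move=> u v; rewrite /strong_prod => /and3P[uv h1 h2].
  have cuv : connect e1 u.1 v.1 by case/orP: h1 => [/eqP->|/connect1 //]; rewrite connect0.
  have cvu : connect e1 v.1 u.1 by rewrite (sym_connect_sym esym1).
  rewrite !inE cuv cvu /=.
  case/orP: h2 => [->|e]; first by left.
  by case/orP: (o2 _ _ e) => ->; [left|right]; rewrite ?orbT.
Qed.

End Suff.


Lemma cochain_CC (T : finType) (e : rel T) (D : {set T}) : cochain_on e D ->
  exists X Y : {set T}, [/\ X :|: Y = D, (forall z, z \in X -> z \in Y -> False),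
     complete_on e X, complete_on e Y & chainX e X Y].
Proof.
move=> [X [Y [XYD dXY cX cY [s [us sX ord]]]]].
have nXY : forall z, z \in X -> z \in Y -> False.
  by move=> z zX zY; move/pred0P: dXY => /(_ z); rewrite /= zX zY.
exists X, Y; split=> //.
have key : forall x x', x \in X -> x' \in X -> (index x s < index x' s)%N ->
    forall t, t \in Y -> e x t -> e x' t.
  move=> x x' xX x'X lt t tY ext.
  have xs : x \in s by rewrite sX.
  have x's : x' \in s by rewrite sX.
  have := ord x _ _ lt; rewrite index_mem x's nth_index // nth_index // => /(_ erefl).
  move=> /subsetP /(_ t); rewrite !inE -XYD inE tY orbT ext orbT /= => /(_ erefl).
  by case/orP=> // /eqP tx'; exfalso; apply: (nXY t) => //; rewrite tx'.
move=> x x' xX x'X.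
case: (ltngtP (index x s) (index x' s)) => h.
- by left; apply: key.
- by right; apply: key.
- left=> t tY; have xs : x \in s by rewrite sX.
  have x's : x' \in s by rewrite sX.
  by have := nth_index x xs; rewrite h nth_index // => ->.
Qed.


Section Suff2.
Variables (T1 T2 : finType) (e1 : rel T1) (e2 : rel T2).
Hypotheses (esym1 : symmetric e1) (eirr1 : irreflexive e1).
Hypotheses (esym2 : symmetric e2) (eirr2 : irreflexive e2).

Definition Kf (A B : {set T1}) (X Y : {set T2}) (v : T1 * T2) : {set T1 * T2} :=
  if (v.1 \in A) && ((v.1 \notin B) || (v.2 \in X))
  then [set p | (p.1 \in A) && (p.2 \in cl e2 X Y v.2)]
  else [set p | (p.1 \in B) && (p.2 \in cl e2 Y X v.2)].

Definition TCP (C A B : {set T1}) :=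
  [/\ A :|: B = C, A :&: B != set0 &
      forall x y, x \in C -> y \in C -> x != y -> (e1 x y <-> (x \in A /\ y \in A) \/ (x \in B /\ y \in B))].

Definition CCP (D X Y : {set T2}) :=
  [/\ X :|: Y = D, (forall z, z \in X -> z \in Y -> False),
     complete_on e2 X, complete_on e2 Y & chainX e2 X Y].

Variables (C A B : {set T1}) (D X Y : {set T2}).
Hypotheses (HA : TCP C A B) (HX : CCP D X Y).

Lemma inAB g : g \in C -> (g \in A) || (g \in B).
Proof. by case: HA => <- _ _; rewrite inE. Qed.

Lemma inXY h : h \in D -> (h \in X) || (h \in Y).
Proof. by case: HX => <- _ _ _ _; rewrite inE. Qed.

Lemma inYX h : h \in D -> (h \in Y) || (h \in X).
Proof. by move/inXY; rewrite orbC. Qed.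

Lemma HXs : CCP D Y X.
Proof.
case: HX => XYD dXY cX cY ch; split=> //.
- by rewrite setUC.
- by move=> z zY zX; apply: (dXY z).
- exact: chain_sym.
Qed.

Lemma Kf_clique v x y : v.1 \in C -> v.2 \in D -> x \in Kf A B X Y v -> y \in Kf A B X Y v -> x != y ->
  strong_prod e1 e2 x y.
Proof.
move=> vC vD; case: HA => ABC _ iff; case: HX => XYD dXY cX cY ch.
have AC : A \subset C by rewrite -ABC subsetUl.
have BC : B \subset C by rewrite -ABC subsetUr.
rewrite /Kf; case: ifP => _; rewrite !inE => /andP[x1 x2] /andP[y1 y2] xy.
- apply: (prod_clique (S1 := fun z => z \in A) (S2 := fun z => z \in cl e2 X Y v.2) _ _ x1 y1 x2 y2 xy).
  + move=> a b aA bA ab; apply/(iff a b) => //; [exact: (subsetP AC)|exact: (subsetP AC)|by left].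
  + by move=> a b ha hb ab; apply: (cl_clique esym2 cX cY ha hb ab).
- apply: (prod_clique (S1 := fun z => z \in B) (S2 := fun z => z \in cl e2 Y X v.2) _ _ x1 y1 x2 y2 xy).
  + move=> a b aA bA ab; apply/(iff a b) => //; [exact: (subsetP BC)|exact: (subsetP BC)|by right].
  + by move=> a b ha hb ab; apply: (cl_clique esym2 cY cX ha hb ab).
Qed.

Lemma Kf_mixed g h g' h' : g \in C -> g' \in C -> h \in D -> h' \in D ->
  (g' == g) || e1 g g' -> (h' == h) || e2 h h' ->
  (g \in A) && ((g \notin B) || (h \in X)) ->
  ~~ ((g' \in A) && ((g' \notin B) || (h' \in X))) ->
  (g', h') \in Kf A B X Y (g, h) \/ (g, h) \in Kf A B X Y (g', h').
Proof.
move=> gC g'C hD h'D eg eh tu ntv.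
case: HA => ABC _ iff; case: HX => XYD dXY cX cY ch.
rewrite /Kf /= tu (negbTE ntv) !inE /=.
move/andP: tu => [gA tu].
case: (boolP (g' \in A)) => g'A.
- left; rewrite ?g'A /=.
  move: ntv; rewrite g'A /= negb_or negbK => /andP[g'B h'X].
  have h'Y : h' \in Y by move: (inXY h'D); rewrite (negbTE h'X).
  exact: (cl_Y dXY h'Y eh).
- right.
  have g'B : g' \in B by move: (inAB g'C); rewrite (negbTE g'A).
  have gg' : g != g' by apply: contraNneq g'A => <-.
  have eg' : e1 g g' by move: eg; rewrite eq_sym (negbTE gg').
  have gB : g \in B.
    by case: ((iff g g' gC g'C gg').1 eg') => [[_ h1]|[h1 _]] //; rewrite h1 in g'A.
  rewrite gB /=.
  have hX : h \in X by move: tu; rewrite gB.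
  have dYX : forall z, z \in Y -> z \in X -> False by move=> z zY zX; apply: (dXY z).
  apply: (cl_Y dYX hX).
  by case/orP: eh => [/eqP->|e]; rewrite ?eqxx // esym2 e orbT.
Qed.

Lemma Kf_cover g h g' h' : g \in C -> g' \in C -> h \in D -> h' \in D ->
  strong_prod e1 e2 (g, h) (g', h') ->
  (g', h') \in Kf A B X Y (g, h) \/ (g, h) \in Kf A B X Y (g', h').
Proof.
move=> gC g'C hD h'D; rewrite /strong_prod /= => /and3P[_ eg eh].
have eg' : (g == g') || e1 g' g by rewrite eq_sym esym1.
have eh' : (h == h') || e2 h' h by rewrite eq_sym esym2.
case: HA => ABC _ iff; case: HX => XYD dXY cX cY ch.
case: (boolP ((g \in A) && ((g \notin B) || (h \in X)))) => tu;
case: (boolP ((g' \in A) && ((g' \notin B) || (h' \in X)))) => tv.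
- rewrite /Kf /= tu tv !inE /=; move/andP: tu => [gA _]; move/andP: tv => [g'A _].
  rewrite gA g'A /=.
  case/orP: eh => [/eqP ->|e].
    by left; apply: cl_self; apply: inXY.
  exact: (cl_cov esym2 ch (inXY hD) (inXY h'D) e).
- exact: Kf_mixed.
- by case: (Kf_mixed g'C gC h'D hD eg' eh' tv tu) => H; [right|left].
- rewrite /Kf /= (negbTE tu) (negbTE tv) !inE /=.
  have gB : g \in B.
    move: tu; rewrite negb_and negb_or negbK => /orP[gA|/andP[-> _] //].
    by move: (inAB gC); rewrite (negbTE gA).
  have g'B : g' \in B.
    move: tv; rewrite negb_and negb_or negbK => /orP[gA|/andP[-> _] //].
    by move: (inAB g'C); rewrite (negbTE gA).
  rewrite gB g'B /=.
  case: HXs => _ dYX _ _ chYX.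
  case/orP: eh => [/eqP ->|e].
    by left; apply: cl_self; apply: inYX.
  exact: (cl_cov esym2 chYX (inYX hD) (inYX h'D) e).
Qed.

End Suff2.

Lemma suff2 (T1 T2 : finType) (e1 : rel T1) (e2 : rel T2) :
  symmetric e1 -> irreflexive e1 -> symmetric e2 -> irreflexive e2 ->
  (forall x, two_complete_on e1 (component e1 x)) ->
  (forall y, cochain_on e2 (component e2 y)) ->
  one_perfectly_orientable (strong_prod e1 e2).
Proof.
move=> esym1 eirr1 esym2 eirr2 H1 H2.
have FA : forall Cs : {set T1}, exists AB : {set T1} * {set T1},
    (exists x, Cs = component e1 x) -> TCP e1 Cs AB.1 AB.2.
  move=> Cs; case: (classic (exists x, Cs = component e1 x)) => [[x ->]|N].
    by have [A0 [B0 H]] := H1 x; exists (A0, B0) => _.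
  by exists (set0, set0).
have FC : forall Ds : {set T2}, exists XY : {set T2} * {set T2},
    (exists y, Ds = component e2 y) -> CCP e2 Ds XY.1 XY.2.
  move=> Ds; case: (classic (exists y, Ds = component e2 y)) => [[y ->]|N].
    by have [X0 [Y0 H]] := cochain_CC (H2 y); exists (X0, Y0) => _.
  by exists (set0, set0).
pose fA Cs := proj1_sig (constructive_indefinite_description _ (FA Cs)).
pose fC Ds := proj1_sig (constructive_indefinite_description _ (FC Ds)).
have fAP : forall x, TCP e1 (component e1 x) (fA (component e1 x)).1 (fA (component e1 x)).2.
  move=> x; exact: (proj2_sig (constructive_indefinite_description _ (FA (component e1 x))) (ex_intro _ x erefl)).
have fCP : forall y, CCP e2 (component e2 y) (fC (component e2 y)).1 (fC (component e2 y)).2.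
  move=> y; exact: (proj2_sig (constructive_indefinite_description _ (FC (component e2 y))) (ex_intro _ y erefl)).
apply: (K_opo (sp_sym esym1 esym2) (sp_irr e1 e2)
  (K := fun v => Kf e2 (fA (component e1 v.1)).1 (fA (component e1 v.1)).2
                   (fC (component e2 v.2)).1 (fC (component e2 v.2)).2 v)).
- by move=> v x y; apply: (@Kf_clique _ _ e1 e2 esym2 _ _ _ _ _ _ (fAP v.1) (fCP v.2) v x y); exact: mem_comp.
- move=> [g h] [g' h'] /= sp.
  have sp' := sp; move: sp'; rewrite /strong_prod /= => /and3P[_ eg eh].
  have cg : component e1 g' = component e1 g by rewrite (comp_adj esym1 eg).
  have ch : component e2 h' = component e2 h by rewrite (comp_adj esym2 eh).
  rewrite cg ch.
  apply: (@Kf_cover _ _ e1 e2 esym1 esym2 _ _ _ _ _ _ (fAP g) (fCP h) g h g' h') => //.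
  + exact: mem_comp.
  + by rewrite -cg; exact: mem_comp.
  + exact: mem_comp.
  + by rewrite -ch; exact: mem_comp.
Qed.


Lemma P3_of (T : finType) (e : rel T) : symmetric e ->
  ~ (forall x, complete_on e (component e x)) ->
  exists a b c, [/\ e a b, e b c, a != c & ~~ e a c].
Proof.
move=> esym H.
have [x Hx] : exists x, ~ complete_on e (component e x).
  by apply: NNPP => H'; apply: H => x; apply: NNPP => Hx; apply: H'; exists x.
have [u [v [uC vC uv nuv]]] : exists u v, [/\ u \in component e x, v \in component e x, u != v & ~~ e u v].
  apply: NNPP => H'; apply: Hx => u v uC vC uv; apply/negPn/negP => nuv.
  by apply: H'; exists u, v.
have cuv : connect e u v.
  move: uC vC; rewrite !inE => uC vC; apply: (@connect_trans _ e x u v _ vC).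
  by rewrite (sym_connect_sym esym).
case/connectP: cuv => p pp lv.
have Pl : ~~ ((last u p == u) || e u (last u p)) by rewrite -lv negb_or eq_sym uv nuv.
have [s [t [est Ps Pt _]]] := @cross T e (fun z => (z == u) || e u z) u p pp (introT orP (or_introl (eqxx u))) Pl.
move: Ps Pt => /= /orP[/eqP su|eus]; first by rewrite -su est orbT.
rewrite negb_or => /andP[tu nut].
by exists u, s, t; split=> //; rewrite eq_sym.
Qed.

Unset Implicit Arguments.
Theorem theorem22 (T1 T2 : finType) (e1 : rel T1) (e2 : rel T2) :
  simple_graph e1 -> simple_graph e2 ->
  2 <= #|T1| -> 2 <= #|T2| ->
  (one_perfectly_orientable (strong_prod e1 e2) <->
   ((forall x, complete_on e1 (component e1 x)) /\ one_perfectly_orientable e2) \/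
   ((forall y, complete_on e2 (component e2 y)) /\ one_perfectly_orientable e1) \/
   ((forall x, two_complete_on e1 (component e1 x)) /\
    (forall y, cochain_on e2 (component e2 y))) \/
   ((forall y, two_complete_on e2 (component e2 y)) /\
    (forall x, cochain_on e1 (component e1 x)))).
Proof.
move=> [esym1 eirr1] [esym2 eirr2] c1 c2; split.
- move=> opo.
  have : (0 < #|T1|)%N by apply: leq_trans c1.
  case/card_gt0P => g0 _.
  have : (0 < #|T2|)%N by apply: leq_trans c2.
  case/card_gt0P => h0 _.
  have opo2 := opo_layer g0 eirr2 opo.
  have opo' := opo_swap opo.
  have opo1 := opo_layer h0 eirr1 opo'.
  case: (classic (forall x, complete_on e1 (component e1 x))) => cc1; first by left.
  case: (classic (forall y, complete_on e2 (component e2 y))) => cc2; first by right; left.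
  have [a [b [c [eab ebc nac neac]]]] := P3_of esym1 cc1.
  have [a' [b' [c' [eab' ebc' nac' neac']]]] := P3_of esym2 cc2.
  have [o op] := opo.
  have [o' op'] := opo'.
  have cochH := partA esym1 eirr1 esym2 eirr2 op eab ebc nac neac.
  have cochG := partA esym2 eirr2 esym1 eirr1 op' eab' ebc' nac' neac'.
  case: (classic (forall x, two_complete_on e1 (component e1 x))) => t1; first by right; right; left.
  case: (classic (forall y, two_complete_on e2 (component e2 y))) => t2; first by right; right; right.
  exfalso.
  have [x Hx] : exists x, ~ two_complete_on e1 (component e1 x).
    by apply: NNPP => H'; apply: t1 => x; apply: NNPP => Hx; apply: H'; exists x.
  have [y Hy] : exists y, ~ two_complete_on e2 (component e2 y).
    by apply: NNPP => H'; apply: t2 => y; apply: NNPP => Hy; apply: H'; exists y.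
  case: (partB esym1 (cochG x)) => // [[g0' [g1 [g2 [g3 wg]]]]].
  case: (partB esym2 (cochH y)) => // [[h0' [h1 [h2 [h3 wh]]]]].
  exact: (domino eirr1 esym2 op wg wh).
- case=> [[H1 H2]|[[H1 H2]|[[H1 H2]|[H1 H2]]]].
  + exact: suff1.
  + by apply: opo_swap; apply: suff1.
  + exact: suff2.
  + by apply: opo_swap; apply: suff2.
Qed.
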